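(* Let $(X,\mathcal{Q},H)$ be a Diophantine space and let $K\subseteq X$ have the automorphism property. Suppose that for every $Q > 0$, the set $\{r\in\mathcal{Q} : H(r)\leq Q\}$ intersects each ball of $X$ in only finitely many points. Fix $(a,A)\in\mathbb{R}^2$, and suppose that $K$ is not uniformly $\kappa\Psi_{a,A}$-approximable for any $\kappa > 0$. Then the set $\{x\in X : x\text{ is not }\kappa\Psi_{a,A}\text{-approximable for any }\kappa > 0\}$ is comeager in $X$.
   Context: A Diophantine space is a triple $(X,\mathcal{Q},H)$ where $X$ is a complete metric space (with metric $\mathrm{dist}$), $\mathcal{Q}\subseteq X$ is a dense subset, and $H:\mathcal{Q}\to(0,\infty)$ (the height function). An automorphism of $(X,\mathcal{Q},H)$ is a bi-Lipschitz map $\Phi:X\to X$ with $\Phi(\mathcal{Q})=\mathcal{Q}$ such that there is a constant $C\geq 1$ with $C^{-1}H(r)\leq H(\Phi(r))\leq C H(r)$ for all $r\in\mathcal{Q}$. A set $K\subseteq X$ has the automorphism property if for every nonempty open $B\subseteq X$ there is an automorphism $\Phi$ with $\Phi(K)\subseteq B$. For a function $\Psi:(0,\infty)\times\mathbb{N}\to(0,\infty)$ and $Q_0\in\mathbb{N}$, a point $x\in X$ is $(\Psi,Q_0)$-approximable if for every integer $Q\geq Q_0$ there exists $r\in\mathcal{Q}$ with $H(r)\leq Q$ and $\mathrm{dist}(x,r)<\Psi(H(r),Q)$; $x$ is $\Psi$-approximable if it is $(\Psi,Q_0)$-approximable for some $Q_0$; a set $S$ is uniformly $\Psi$-approximable if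 there is a single $Q_0$ such that every point of $S$ is $(\Psi,Q_0)$-approximable. Here $\kappa\Psi_{a,A}(q,Q)=\kappa q^{-a}Q^{-A}$. *)

(* Defs.v *)
From Stdlib Require Import Reals List.
Open Scope R_scope.

Section Diophantine.
Context {X : Type}.

Definition is_metric (dist : X -> X -> R) : Prop :=
  (forall x y, 0 <= dist x y) /\
  (forall x y, dist x y = 0 <-> x = y) /\
  (forall x y, dist x y = dist y x) /\
  (forall x y z, dist x z <= dist x y + dist y z).

Definition cauchy_seq (dist : X -> X -> R) (u : nat -> X) : Prop :=
  forall eps, 0 < eps -> exists N, forall m n, (N <= m)%nat -> (N <= n)%nat ->
    dist (u m) (u n) < eps.

Definition converges_to (dist : X -> X -> R) (u : nat -> X) (l : X) : Prop :=
  forall eps, 0 < eps -> exists N, forall n, (N <= n)%nat -> dist (u n) l < eps.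

Definition is_complete (dist : X -> X -> R) : Prop :=
  forall u, cauchy_seq dist u -> exists l, converges_to dist u l.

Definition ball (dist : X -> X -> R) (x : X) (rho : R) : X -> Prop :=
  fun y => dist x y < rho.

Definition is_open (dist : X -> X -> R) (U : X -> Prop) : Prop :=
  forall x, U x -> exists rho, 0 < rho /\ forall y, ball dist x rho y -> U y.

Definition is_dense (dist : X -> X -> R) (S : X -> Prop) : Prop :=
  forall x eps, 0 < eps -> exists s, S s /\ dist x s < eps.

Definition comeager (dist : X -> X -> R) (S : X -> Prop) : Prop :=
  exists U : nat -> (X -> Prop),
    (forall n, is_open dist (U n) /\ is_dense dist (U n)) /\
    (forall x, (forall n, U n x) -> S x).

Definition bi_lipschitz (dist : X -> X -> R) (Phi : X -> X) : Prop :=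
  exists L, 1 <= L /\ forall x y,
    dist x y / L <= dist (Phi x) (Phi y) /\ dist (Phi x) (Phi y) <= L * dist x y.

Definition automorphism (dist : X -> X -> R) (Qs : X -> Prop) (H : X -> R)
    (Phi : X -> X) : Prop :=
  bi_lipschitz dist Phi /\
  (forall r, Qs r -> Qs (Phi r)) /\
  (forall r, Qs r -> exists s, Qs s /\ Phi s = r) /\
  exists C, 1 <= C /\ forall r, Qs r -> H r / C <= H (Phi r) /\ H (Phi r) <= C * H r.

Definition automorphism_property (dist : X -> X -> R) (Qs : X -> Prop) (H : X -> R)
    (K : X -> Prop) : Prop :=
  forall B : X -> Prop, is_open dist B -> (exists x, B x) ->
    exists Phi, automorphism dist Qs H Phi /\ forall x, K x -> B (Phi x).

(* (Psi, Q0)-approximability; N = {1,2,...}, so Q0 >= 1 *)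
Definition approx_Q0 (dist : X -> X -> R) (Qs : X -> Prop) (H : X -> R)
    (Psi : R -> nat -> R) (Q0 : nat) (x : X) : Prop :=
  forall Q : nat, (Q0 <= Q)%nat ->
    exists r, Qs r /\ H r <= INR Q /\ dist x r < Psi (H r) Q.

Definition approximable (dist : X -> X -> R) (Qs : X -> Prop) (H : X -> R)
    (Psi : R -> nat -> R) (x : X) : Prop :=
  exists Q0 : nat, (1 <= Q0)%nat /\ approx_Q0 dist Qs H Psi Q0 x.

Definition uniformly_approximable (dist : X -> X -> R) (Qs : X -> Prop) (H : X -> R)
    (Psi : R -> nat -> R) (S : X -> Prop) : Prop :=
  exists Q0 : nat, (1 <= Q0)%nat /\ forall x, S x -> approx_Q0 dist Qs H Psi Q0 x.

Definition finite_set (S : X -> Prop) : Prop :=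
  exists l : list X, forall x, S x -> In x l.

End Diophantine.

Definition kPsi (kappa a A : R) (q : R) (Q : nat) : R :=
  kappa * Rpower q (- a) * Rpower (INR Q) (- A).

(* Main.v *)
Require Import Defs.
From Stdlib Require Import Reals List.
From Stdlib Require Import Lra Lia Arith Classical.
Open Scope R_scope.

Lemma ln_le' : forall x y, 0 < x -> x <= y -> ln x <= ln y.
Proof.
  intros x y Hx Hxy. destruct (Rle_lt_or_eq_dec _ _ Hxy) as [h|h].
  - left; apply ln_increasing; auto.
  - subst; right; reflexivity.
Qed.

Lemma exp_le' : forall x y, x <= y -> exp x <= exp y.
Proof.
  intros x y Hxy. destruct (Rle_lt_or_eq_dec _ _ Hxy) as [h|h].
  - left; apply exp_increasing; auto.
  - subst; right; reflexivity.
Qed.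

Lemma rp_scale : forall x y k b, 0 < x -> 0 < y -> 1 <= k -> x / k <= y -> y <= k * x ->
  Rpower y b * Rpower k (- Rabs b) <= Rpower x b.
Proof.
  intros x y k b Hx Hy Hk H1 H2. unfold Rpower. rewrite <- exp_plus. apply exp_le'.
  assert (Hk0 : 0 < k) by lra.
  assert (L1 : ln y <= ln k + ln x).
  { rewrite <- ln_mult by lra. apply ln_le'; lra. }
  assert (x <= k * y).
  { apply Rmult_le_compat_l with (r := k) in H1; [|lra].
    unfold Rdiv in H1. replace (k * (x * / k)) with x in H1 by (field; lra). lra. }
  assert (L2 : ln x <= ln k + ln y).
  { rewrite <- ln_mult by lra. apply ln_le'; lra. }
  assert (L3 : 0 <= ln k).
  { rewrite <- ln_1. apply ln_le'; lra. }
  destruct (Rle_or_lt 0 b).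
  - rewrite Rabs_right by lra. nra.
  - rewrite Rabs_left by lra. nra.
Qed.

Lemma Rpower_pos' : forall x y, 0 < Rpower x y.
Proof. intros; unfold Rpower; apply exp_pos. Qed.

Lemma kPsi_pos : forall m a A q Q, 0 < m -> 0 < kPsi m a A q Q.
Proof.
  intros. unfold kPsi. pose proof (Rpower_pos' q (-a)). pose proof (Rpower_pos' (INR Q) (-A)).
  apply Rmult_lt_0_compat; [apply Rmult_lt_0_compat|]; auto.
Qed.

Fixpoint minl {X : Type} (f : X -> R) (d : R) (l : list X) : R :=
  match l with nil => d | x :: t => Rmin (f x) (minl f d t) end.

Lemma minl_pos {X : Type} (f : X -> R) d l : 0 < d -> (forall x, 0 < f x) -> 0 < minl f d l.
Proof.
  intros Hd Hf. induction l; simpl; auto. apply Rmin_glb_lt; auto.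
Qed.

Lemma minl_le {X : Type} (f : X -> R) d l : forall x, In x l -> minl f d l <= f x.
Proof.
  induction l; simpl; intros x Hx; [contradiction|].
  destruct Hx as [<-|Hx].
  - apply Rmin_l.
  - eapply Rle_trans; [apply Rmin_r| auto].
Qed.

Theorem proposition1 (X : Type) (dist : X -> X -> R) (Qs : X -> Prop) (H : X -> R)
  (K : X -> Prop) (a A : R) :
  is_metric dist ->
  is_complete dist ->
  is_dense dist Qs ->
  (forall r, Qs r -> 0 < H r) ->
  automorphism_property dist Qs H K ->
  (forall (Q : R), 0 < Q -> forall (x : X) (rho : R), 0 < rho ->
     finite_set (fun r => Qs r /\ H r <= Q /\ ball dist x rho r)) ->
  (forall kappa, 0 < kappa -> ~ uniformly_approximable dist Qs H (kPsi kappa a A) K) ->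
  comeager dist
    (fun x => forall kappa, 0 < kappa -> ~ approximable dist Qs H (kPsi kappa a A) x).
Proof.
  intros Hm Hc Hd Hpos Haut Hfin Hnu.
  destruct Hm as (Hd0 & Hdeq & Hsym & Htri).
  assert (Hxx : forall x, dist x x = 0) by (intro; apply Hdeq; reflexivity).
  set (Aset := fun (m : R) (Q : nat) (y : X) => forall r, Qs r -> H r <= INR Q ->
                 kPsi m a A (H r) Q <= dist y r).
  exists (fun n x => exists Q, (S n <= Q)%nat /\ exists rho, 0 < rho /\
            forall y, dist x y < rho -> Aset (INR n + 1) Q y).
  split; [intro n; split|].
  - intros x (Q & HQ & rho & Hrho & Hy). exists (rho / 2). split; [lra|].
    intros y Hxy. unfold ball in Hxy. exists Q; split; auto.
    exists (rho / 2); split; [lra|]. intros z Hz. apply Hy.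
    pose proof (Htri x y z). lra.
  - intros x0 eps Heps.
    assert (Bopen : is_open dist (ball dist x0 eps)).
    { intros y Hy; exists (eps - dist x0 y); unfold ball in *; split; [lra|].
      intros z Hz; pose proof (Htri x0 y z); lra. }
    assert (Bne : exists x, ball dist x0 eps x) by (exists x0; unfold ball; rewrite Hxx; lra).
    destruct (Haut _ Bopen Bne) as (Phi & (HL & Hq1 & Hq2 & HC) & HK).
    destruct HL as (L & HL1 & HLd). destruct HC as (C & HC1 & HCh).
    destruct (INR_archimed 1 C) as [N HN]; [lra|]. rewrite Rmult_1_r in HN.
    assert (HN1 : (1 <= N)%nat).
    { destruct N; [simpl in HN; lra| lia]. }
    set (m := INR n + 1).
    assert (Hm0 : 0 < m) by (unfold m; pose proof (pos_INR n); lra).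
    set (c1 := Rpower C (- Rabs (- a))).
    set (c2 := Rpower (2 * INR N) (- Rabs (- A))).
    assert (Hc1 : 0 < c1) by apply Rpower_pos'.
    assert (Hc2 : 0 < c2) by apply Rpower_pos'.
    set (kp := 2 * m * L / (c1 * c2)).
    assert (Hkp : 0 < kp).
    { unfold kp. apply Rdiv_lt_0_compat; [nra|]. apply Rmult_lt_0_compat; auto. }
    assert (Hkpe : kp * (c1 * c2) = 2 * m * L) by (unfold kp; field; split; lra).
    specialize (Hnu kp Hkp).
    assert (Hex : exists z, K z /\ ~ approx_Q0 dist Qs H (kPsi kp a A) (N * S n) z).
    { apply NNPP; intro Hno; apply Hnu; exists (N * S n)%nat; split; [nia|].
      intros x Kx. apply NNPP; intro; apply Hno; eauto. }
    destruct Hex as (z & Kz & Hz). unfold approx_Q0 in Hz.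
    apply not_all_ex_not in Hz. destruct Hz as [Q HQ].
    apply imply_to_and in HQ. destruct HQ as [HQ1 HQ2].
    assert (Hfar : forall r, Qs r -> H r <= INR Q -> kPsi kp a A (H r) Q <= dist z r).
    { intros r Hr HrQ. apply Rnot_lt_le. intro. apply HQ2. exists r; auto. }
    set (Q2 := (Q / N)%nat).
    assert (HNz : N <> 0%nat) by lia.
    assert (F1 : (N * Q2 <= Q)%nat) by (apply Nat.Div0.mul_div_le).
    assert (F2 : (Q < N * S Q2)%nat) by (apply Nat.mul_succ_div_gt; auto).
    assert (F3 : (S n <= Q2)%nat) by (apply Nat.div_le_lower_bound; auto).
    assert (F4 : (Q <= 2 * N * Q2)%nat).
    { clearbody Q2. assert (N <= N * Q2)%nat by nia. nia. }
    assert (R1 : INR N * INR Q2 <= INR Q) by (rewrite <- mult_INR; apply le_INR; auto).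
    assert (R2 : INR Q <= 2 * INR N * INR Q2).
    { replace 2 with (INR 2) by (simpl; lra). rewrite <- !mult_INR. apply le_INR; auto. }
    assert (RQ2 : 1 <= INR Q2) by (replace 1 with (INR 1) by reflexivity; apply le_INR; lia).
    assert (RN : 1 <= INR N) by (replace 1 with (INR 1) by reflexivity; apply le_INR; lia).
    set (y0 := Phi z).
    assert (Hkey : forall r', Qs r' -> H r' <= INR Q2 -> 2 * kPsi m a A (H r') Q2 <= dist y0 r').
    { intros r' Hr' Hr'Q. destruct (Hq2 r' Hr') as (s & Hs & <-).
      destruct (HCh s Hs) as [Hh1 Hh2].
      pose proof (Hpos s Hs) as Hsp. pose proof (Hpos _ (Hq1 s Hs)) as Hps.
      assert (Hs1 : H s <= C * H (Phi s)).
      { apply Rmult_le_compat_l with (r := C) in Hh1; [|lra].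
        unfold Rdiv in Hh1. replace (C * (H s * / C)) with (H s) in Hh1 by (field; lra). lra. }
      assert (HsQ : H s <= INR Q) by nra.
      specialize (Hfar s Hs HsQ).
      destruct (HLd z s) as [HLa _].
      pose proof (rp_scale (H s) (H (Phi s)) C (- a) Hsp Hps HC1 Hh1 Hh2) as S1.
      assert (HQp : 0 < INR Q) by lra.
      assert (S2 : Rpower (INR Q2) (- A) * c2 <= Rpower (INR Q) (- A)).
      { apply rp_scale; try lra.
        - apply Rmult_le_reg_r with (r := 2 * INR N); [lra|].
          unfold Rdiv. rewrite Rmult_assoc, Rinv_l by lra. lra.
        - nra. }
      fold c1 in S1.
      unfold kPsi in Hfar |- *.
      set (P1 := Rpower (H (Phi s)) (- a)) in *.
      set (P2 := Rpower (INR Q2) (- A)) in *.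
      set (Ps := Rpower (H s) (- a)) in *.
      set (PQ := Rpower (INR Q) (- A)) in *.
      assert (0 < P1) by apply Rpower_pos'. assert (0 < P2) by apply Rpower_pos'.
      assert (Hmid : 2 * m * L * (P1 * P2) <= dist z s).
      { eapply Rle_trans; [|exact Hfar].
        replace (2 * m * L * (P1 * P2)) with (kp * (P1 * c1) * (P2 * c2))
          by (rewrite <- Hkpe; ring).
        assert (0 < kp * (P1 * c1)) by (apply Rmult_lt_0_compat; [lra| apply Rmult_lt_0_compat; lra]).
        apply Rmult_le_compat; try lra.
        - pose proof (Rmult_lt_0_compat _ _ H1 Hc2); lra.
        - apply Rmult_le_compat_l; lra. }
      eapply Rle_trans; [|exact HLa].
      replace (2 * (m * P1 * P2)) with ((2 * m * L * (P1 * P2)) / L) by (field; lra).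
      unfold Rdiv. apply Rmult_le_compat_r; [left; apply Rinv_0_lt_compat; lra| exact Hmid]. }
    assert (HQ2p : 0 < INR Q2) by lra.
    destruct (Hfin (INR Q2) HQ2p y0 1 Rlt_0_1) as [l Hl].
    set (delta := Rmin (1 / 2) (minl (fun r => kPsi m a A (H r) Q2) 1 l)).
    assert (Hdel : 0 < delta).
    { apply Rmin_glb_lt; [lra|]. apply minl_pos; [lra|]. intro; apply kPsi_pos; auto. }
    exists y0. split.
    + exists Q2; split; [lia|]. exists delta; split; auto.
      intros y Hy r Hr HrQ.
      pose proof (Hkey r Hr HrQ). pose proof (kPsi_pos m a A (H r) Q2 Hm0).
      pose proof (Htri y0 y r).
      destruct (Rlt_or_le (dist y0 r) 1) as [Hlt|Hge].
      * assert (Hin : In r l) by (apply Hl; unfold ball; auto).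
        pose proof (minl_le (fun r => kPsi m a A (H r) Q2) 1 l r Hin).
        assert (delta <= kPsi m a A (H r) Q2) by (unfold delta; eapply Rle_trans; [apply Rmin_r|auto]).
        simpl in *. lra.
      * assert (delta <= 1/2) by apply Rmin_l. lra.
    + pose proof (HK z Kz) as Hb. unfold ball in Hb. exact Hb.
  - intros x Hx kappa Hk (Q0 & HQ0 & Happ).
    destruct (INR_archimed 1 kappa) as [M HM]; [lra|]. rewrite Rmult_1_r in HM.
    destruct (Hx (M + Q0)%nat) as (Q & HQ & rho & Hrho & HA).
    assert (Hx0 : dist x x < rho) by (rewrite Hxx; auto).
    specialize (HA x Hx0).
    destruct (Happ Q ltac:(lia)) as (r & Hr & HrQ & Hdr).
    specialize (HA r Hr HrQ).
    assert (kPsi kappa a A (H r) Q <= kPsi (INR (M + Q0) + 1) a A (H r) Q).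
    { unfold kPsi. pose proof (Rpower_pos' (H r) (-a)). pose proof (Rpower_pos' (INR Q) (-A)).
      apply Rmult_le_compat_r; [lra|]. apply Rmult_le_compat_r; [lra|].
      rewrite plus_INR. pose proof (pos_INR Q0). lra. }
    lra.
Qed.
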